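(* Let $\lambda$ be a nonzero real number, $x$ real, and $n\ge0$ an integer. Then $$\beta_{n,\lambda}(x)=\sum_{j=0}^{n}\frac{\lambda^{j}(1)_{j+1,\frac{1}{\lambda}}}{j+1}\sum_{k=j}^{n}\binom{n}{k}S_{2,\lambda}(k,j)\,(x)_{n-k,\lambda}.$$
   Context: For real $y$, $\mu\neq 0$ and integer $k\ge0$: $(y)_{0,\mu}=1$, $(y)_{k,\mu}=y(y-\mu)\cdots(y-(k-1)\mu)$ (used with $\mu=\lambda$ and $\mu=1/\lambda$); $(y)_0=1$, $(y)_k=y(y-1)\cdots(y-k+1)$. The degenerate exponential is $e_\lambda^x(t)=\sum_{k\ge0}(x)_{k,\lambda}t^k/k!=(1+\lambda t)^{x/\lambda}$, $e_\lambda(t)=e^1_\lambda(t)$. The degenerate Bernoulli polynomials are defined by $\frac{t}{e_\lambda(t)-1}e_\lambda^x(t)=\sum_{n\ge0}\beta_{n,\lambda}(x)\frac{t^n}{n!}$. The degenerate Stirling numbers of the second kind are defined by $(x)_{n,\lambda}=\sum_{k=0}^{n}S_{2,\lambda}(n,k)(x)_{k}$ ($n\ge0$). *)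

(* Defs.v *)
From HB Require Import structures.
From mathcomp Require Import all_boot all_order all_algebra.
From mathcomp Require Export reals.
Set Implicit Arguments. Unset Strict Implicit. Unset Printing Implicit Defensive.
Import Order.TTheory GRing.Theory Num.Theory.
Local Open Scope ring_scope.

Definition dfall {R : realType} (y mu : R) (k : nat) : R :=
  \prod_(i < k) (y - i%:R * mu).

Definition ffall {R : realType} (y : R) (k : nat) : R := dfall y 1 k.

(* b is the sequence of degenerate Bernoulli polynomials beta_{n,lam}(x):
   the generating-function identity  t/(e_lam(t)-1) e_lam^x(t) = sum b_n t^n/n!
   multiplied out as the formal power series identity
   (e_lam(t) - 1) * (sum_n b_n t^n/n!) = t * e_lam^x(t),
   compared coefficientwise on t^m/m!  (e_lam(t)-1 = sum_{k>=1} (1)_{k,lam} t^k/k!,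
   t e_lam^x(t) = sum_m m (x)_{m-1,lam} t^m/m!).  Since e_lam(t)-1 = t + O(t^2)
   this determines b uniquely. *)
Definition is_degBernoulli {R : realType} (lam x : R) (b : nat -> R) : Prop :=
  forall m : nat,
    \sum_(k < m.+1) 'C(m, k)%:R * (dfall 1 lam k - ((k : nat) == 0%N)%:R) * b (m - k)%N
    = m%:R * dfall x lam m.-1.

Definition is_degStirling2 {R : realType} (lam : R) (S : nat -> nat -> R) : Prop :=
  forall (n : nat) (y : R), dfall y lam n = \sum_(k < n.+1) S n k * ffall y k.

(* Main.v *)
Require Import Defs.
From HB Require Import structures.
From mathcomp Require Import all_boot all_order all_algebra.
From mathcomp Require Import reals.
From mathcomp Require Import ring lra.
Import Order.TTheory GRing.Theory Num.Theory.
Local Open Scope ring_scope.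

Section Conv.
Variable R : realType.
Implicit Types f g h : nat -> R.

Definition conv f g (m : nat) : R :=
  \sum_(k < m.+1) 'C(m, k)%:R * f k * g (m - k)%N.

Definition PP (M : nat) f : {poly R} := \poly_(i < M) (f i / i`!%:R).

Lemma fact_neq0 n : (n`!%:R : R) != 0.
Proof. by rewrite pnatr_eq0 -lt0n fact_gt0. Qed.

Lemma coefPM M f g i : (i < M)%N -> (PP M f * PP M g)`_i = conv f g i / i`!%:R.
Proof.
move=> hi; rewrite coefM /conv mulr_suml; apply: eq_bigr => -[j hj] _ /=.
rewrite !coef_poly.
have hj' : (j <= i)%N by [].
rewrite (leq_ltn_trans hj' hi) (leq_ltn_trans (leq_subr j i) hi).
have hb := bin_fact hj'.
have hC : ('C(i, j)%:R : R) != 0 by rewrite pnatr_eq0 -lt0n bin_gt0.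
have := fact_neq0 j; have := fact_neq0 (i - j); have := fact_neq0 i.
rewrite -hb !natrM => hI hB hA.
field; apply/and3P; split => //.
Qed.

Lemma coefM_congr (p q r : {poly R}) m :
  (forall j, (j <= m)%N -> p`_j = q`_j) -> (p * r)`_m = (q * r)`_m.
Proof.
by move=> h; rewrite !coefM; apply: eq_bigr => -[j hj] _ /=; rewrite h.
Qed.

Lemma conv_comm f g m : conv f g m = conv g f m.
Proof.
have := @coefPM m.+1 f g m (ltnSn m); rewrite mulrC coefPM // => e.
by have := congr1 (fun z => z * m`!%:R) e; rewrite !divfK ?fact_neq0.
Qed.

Lemma conv_assoc f g h m : conv f (conv g h) m = conv (conv f g) h m.
Proof.
have e1 : (PP m.+1 f * PP m.+1 g * PP m.+1 h)`_m = conv (conv f g) h m / m`!%:R.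
  rewrite (@coefM_congr _ (PP m.+1 (conv f g))) ?coefPM // => j hj.
  by rewrite coefPM // coef_poly ltnS hj.
have e2 : (PP m.+1 f * (PP m.+1 g * PP m.+1 h))`_m = conv f (conv g h) m / m`!%:R.
  rewrite mulrC (@coefM_congr _ (PP m.+1 (conv g h))) ?coefPM 1?conv_comm // => j hj.
  by rewrite coefPM // coef_poly ltnS hj.
rewrite mulrA e1 in e2.
by have := congr1 (fun z => z * m`!%:R) e2; rewrite !divfK ?fact_neq0.
Qed.

Lemma conv_eql f1 f2 g m : (forall k, f1 k = f2 k) -> conv f1 g m = conv f2 g m.
Proof. by move=> h; apply: eq_bigr => k _; rewrite h. Qed.


Lemma ffall_nat_gt (j i : nat) : (j < i)%N -> ffall (j%:R : R) i = 0.
Proof.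
move=> hji; rewrite /ffall /dfall (bigD1 (Ordinal hji)) //= mulr1 subrr mul0r.
by [].
Qed.

Lemma ffall_nat_self (j : nat) : ffall (j%:R : R) j != 0.
Proof.
rewrite /ffall /dfall; apply/prodf_neq0 => -[i hi] _ /=.
by rewrite mulr1 -natrB ?(ltnW hi) // pnatr_eq0 subn_eq0 -ltnNge.
Qed.

Lemma ffall_indep (N : nat) (C : nat -> R) :
  (forall y : R, \sum_(j < N) C j * ffall y j = 0) -> forall j, (j < N)%N -> C j = 0.
Proof.
move=> h j; elim: j {-2}j (leqnn j) => [|j IH] i hij hiN.
- have := h 0; rewrite (bigD1 (Ordinal hiN)) //= big1 ?addr0.
    move/eqP; rewrite mulf_eq0; move: hij; rewrite leqn0 => /eqP -> .
    by have := ffall_nat_self 0 => /negPf ->; rewrite orbF => /eqP.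
  move=> [k hk] /= hne; move: hij; rewrite leqn0 => /eqP hi; subst i.
  by rewrite (@ffall_nat_gt 0 k) ?mulr0 // lt0n; apply: contra hne => /eqP h0; apply/eqP/val_inj.
- have := h i%:R; rewrite (bigD1 (Ordinal hiN)) //= big1 ?addr0.
    by move/eqP; rewrite mulf_eq0 (negPf (ffall_nat_self i)) orbF => /eqP.
  move=> [k hk] /= hne.
  have hki : k != i by apply: contra hne => /eqP e; apply/eqP/val_inj.
  case: (ltngtP k i) => [hlt|hgt|heq]; last by rewrite heq eqxx in hki.
  + by rewrite (IH k) ?mul0r // -ltnS (leq_trans hlt hij).
  + by rewrite ffall_nat_gt ?mulr0.
Qed.

Lemma ffall_diff (y : R) (j : nat) :
  ffall (y + 1) j.+1 - ffall y j.+1 = j.+1%:R * ffall y j.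
Proof.
rewrite /ffall /dfall big_ord_recl big_ord_recr /=.
have -> : \prod_(i < j) (y + 1 - (bump 0 i)%:R * 1) = \prod_(i < j) (y - i%:R * 1).
  by apply: eq_bigr => i _; rewrite /bump /= add1n -addn1 natrD; ring.
rewrite -natr1; ring.
Qed.

Lemma dfallS (y mu : R) k : dfall y mu k.+1 = dfall y mu k * (y - k%:R * mu).
Proof. by rewrite /dfall big_ord_recr. Qed.

Lemma vandermonde (lam a b : R) (m : nat) :
  \sum_(k < m.+1) 'C(m, k)%:R * dfall a lam k * dfall b lam (m - k)%N
  = dfall (a + b) lam m.
Proof.
elim: m => [|m IH].
  by rewrite big_ord_recl big_ord0 /dfall !big_ord0 addr0 bin0 !mulr1.
rewrite big_ord_recl /= bin0 subn0.
under eq_bigr => k _ do rewrite /bump /= add1n binS natrD !mulrDl subSS.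
rewrite big_split /=.
have e1 : \sum_(k < m.+1) 'C(m, k)%:R * dfall a lam k.+1 * dfall b lam (m - k)%N
   = \sum_(k < m.+1) 'C(m, k)%:R * dfall a lam k * dfall b lam (m - k)%N * (a - k%:R * lam).
  by apply: eq_bigr => k _; rewrite dfallS mulrA; ring.
have e2 : 1%:R * dfall a lam 0 * dfall b lam m.+1 +
   \sum_(k < m.+1) 'C(m, k.+1)%:R * dfall a lam k.+1 * dfall b lam (m - k)%N
   = \sum_(k < m.+1) 'C(m, k)%:R * dfall a lam k * dfall b lam (m - k)%N * (b - (m - k)%:R * lam).
  have -> : 1%:R * dfall a lam 0 * dfall b lam m.+1 +
     \sum_(k < m.+1) 'C(m, k.+1)%:R * dfall a lam k.+1 * dfall b lam (m - k)%N
     = \sum_(k < m.+2) 'C(m, k)%:R * dfall a lam k * dfall b lam (m.+1 - k)%N.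
    by rewrite [RHS]big_ord_recl bin0 subn0.
  rewrite big_ord_recr /= bin_small // mul0r mul0r addr0.
  apply: eq_bigr => -[k hk] _ /=.
  by rewrite subSn // dfallS mulrA.
rewrite addrA e2 e1 -big_split /=.
rewrite dfallS -IH mulr_suml; apply: eq_bigr => -[k hk] _ /=.
rewrite natrB //; ring.
Qed.

Lemma exch (F : nat -> R) (T : nat -> nat -> R) (w : nat -> R) m :
  \sum_(k < m.+1) F k * \sum_(j < (m - k).+1) T (m - k)%N j * w j =
  \sum_(j < m.+1) (\sum_(k < m.+1) F k * (if (j <= m - k)%N then T (m - k)%N j else 0)) * w j.
Proof.
have e : forall k : 'I_m.+1, \sum_(j < (m - k).+1) T (m - k)%N j * w j =
   \sum_(j < m.+1) (if (j <= m - k)%N then T (m - k)%N j else 0) * w j.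
  move=> k; rewrite (big_ord_widen m.+1 (fun j => T (m - k)%N j * w j)) ?ltnS ?leq_subr //.
  rewrite big_mkcond; apply: eq_bigr => j _; rewrite ltnS.
  by case: ifP => _; rewrite ?mul0r.
under eq_bigr => k _ do rewrite e mulr_sumr.
rewrite exchange_big /=; apply: eq_bigr => j _; rewrite mulr_suml.
by apply: eq_bigr => k _; rewrite mulrA.
Qed.

Lemma dfall_zero (y mu : R) i k : (i < k)%N -> y = i%:R * mu -> dfall y mu k = 0.
Proof.
move=> hik hy; rewrite /dfall (bigD1 (Ordinal hik)) //= hy subrr mul0r //.
Qed.

Lemma ffall0 (y : R) : ffall y 0 = 1.
Proof. by rewrite /ffall /dfall big_ord0. Qed.

Definition aa (lam : R) (k : nat) : R := dfall 1 lam k - (k == 0%N)%:R.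
Definition cc (lam : R) (j : nat) : R := lam ^+ j * dfall 1 lam^-1 j.+1 / j.+1%:R.
Definition DD (lam : R) (S2 : nat -> nat -> R) (k : nat) : R :=
  \sum_(j < k.+1) S2 k j * cc lam j.

Lemma cc_ff (lam : R) j : lam != 0 -> j.+1%:R * cc lam j = ffall lam j.+1 / lam.
Proof.
move=> hl; rewrite /cc /ffall /dfall.
have -> : \prod_(i < j.+1) (lam - i%:R * 1) = \prod_(i < j.+1) (lam * (1 - i%:R * lam^-1)).
  by apply: eq_bigr => i _; field.
rewrite big_split /= prodr_const card_ord exprS.
have hj : (j.+1%:R : R) != 0 by rewrite pnatr_eq0.
field; move: hj; rewrite -addn1 natrD addrC => ->; by rewrite hl.
Qed.

Lemma aD (lam : R) (S2 : nat -> nat -> R) (hlam : lam != 0)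
  (hS : is_degStirling2 lam S2) m :
  conv (aa lam) (DD lam S2) m = (m == 1%N)%:R.
Proof.
pose A j := \sum_(k < m.+1) 'C(m, k)%:R * aa lam k *
              (if (j <= m - k)%N then S2 (m - k)%N j else 0).
pose B j := if (j < m)%N then S2 m j.+1 * j.+1%:R else 0.
have step1 : forall y : R, \sum_(k < m.+1) 'C(m, k)%:R * aa lam k * dfall y lam (m - k)%N
    = dfall (y + 1) lam m - dfall y lam m.
  move=> y; rewrite [y + 1]addrC -(vandermonde lam 1 y m).
  under eq_bigr => k _ do rewrite /aa mulrBr mulrBl.
  rewrite sumrB; congr (_ - _).
  rewrite big_ord_recl /= bin0 subn0 mulr1 mul1r big1 ?addr0 // => k _.
  by rewrite mulr0 mul0r.
have step2 : forall y : R, \sum_(j < m.+1) (A j - B j) * ffall y j = 0.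
  move=> y; under eq_bigr => j _ do rewrite mulrBl.
  rewrite sumrB; apply/eqP; rewrite subr_eq0; apply/eqP.
  have L : \sum_(k < m.+1) 'C(m, k)%:R * aa lam k * dfall y lam (m - k)%N
      = \sum_(j < m.+1) A j * ffall y j.
    rewrite /A -(exch (fun k => 'C(m, k)%:R * aa lam k) S2 (ffall y)).
    by apply: eq_bigr => k _; rewrite hS.
  have Rr : dfall (y + 1) lam m - dfall y lam m = \sum_(j < m.+1) B j * ffall y j.
    rewrite !hS -sumrB big_ord_recl !ffall0 subrr add0r.
    rewrite [RHS]big_ord_recr /= /B ltnn mul0r addr0.
    apply: eq_bigr => -[j hj] _ /=; rewrite hj /bump /= add1n -mulrBr ffall_diff.
    by rewrite mulrA.
  by rewrite -L step1 Rr.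
have AB : forall j, (j < m.+1)%N -> A j = B j.
  move=> j hj; apply/eqP; rewrite -subr_eq0; apply/eqP.
  have := @ffall_indep m.+1 (fun j => A j - B j) step2 j hj. by [].
have step4 : conv (aa lam) (DD lam S2) m = \sum_(j < m.+1) A j * cc lam j.
  rewrite /A -(exch (fun k => 'C(m, k)%:R * aa lam k) S2 (cc lam)).
  by apply: eq_bigr => k _.
rewrite step4.
have step5 : \sum_(j < m.+1) A j * cc lam j = \sum_(j < m) S2 m j.+1 * (ffall lam j.+1 / lam).
  rewrite big_ord_recr /= AB // /B ltnn mul0r addr0.
  apply: eq_bigr => -[j hj] _ /=; rewrite AB /B ?hj; last by rewrite ltnS ltnW.
  by rewrite -mulrA cc_ff.
rewrite step5.
have h0 : S2 m 0 = dfall 0 lam m.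
  rewrite hS big_ord_recl ffall0 mulr1 big1 ?addr0 // => i _.
  by rewrite (@ffall_nat_gt 0) ?mulr0.
have hl : \sum_(j < m) S2 m j.+1 * (ffall lam j.+1 / lam) = (dfall lam lam m - dfall 0 lam m) / lam.
  rewrite hS -h0 big_ord_recl ffall0 mulr1 [S2 m 0 + _]addrC addrK mulr_suml.
  by apply: eq_bigr => j _; rewrite mulrA.
rewrite hl.
case: m {A B step1 step2 AB step4 step5 h0 hl} => [|[|m]].
- by rewrite /dfall !big_ord0 subrr mul0r.
- rewrite /dfall !big_ord1 /= !mul0r !subr0 divff //.
- rewrite (@dfall_zero lam lam 1) ?mul1r // (@dfall_zero 0 lam 0) ?mul0r //.
  by rewrite subrr mul0r.
Qed.

Lemma conv_uniq (a f g : nat -> R) : a 0%N = 0 -> a 1%N = 1 ->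
  (forall m, conv a f m = conv a g m) -> forall i, f i = g i.
Proof.
move=> a0 a1 h i; elim: i {-2}i (leqnn i) => [|i IH] j hji.
- have := h 1%N; rewrite /conv !big_ord_recl !big_ord0 /= a0 a1.
  rewrite !mulr0 !mul0r !add0r !addr0 /bump /= bin1 subnn !mulr1.
  by rewrite !mul1r; move: hji; rewrite leqn0 => /eqP ->.
- case: (ltngtP j i.+1) hji => // [hlt|->] _; first by apply: IH; rewrite -ltnS.
  have := h i.+2; rewrite /conv !(big_ord_recl i.+2) !(big_ord_recl i.+1) /= a0 !mulr0 !mul0r !add0r.
  rewrite /bump /= !add1n a1 mulr1 subSS subn0.
  have -> : \sum_(k < i.+1) 'C(i.+2, k.+2)%:R * a k.+2 * f (i.+2 - k.+2)%N
          = \sum_(k < i.+1) 'C(i.+2, k.+2)%:R * a k.+2 * g (i.+2 - k.+2)%N.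
    apply: eq_bigr => -[k hk] _ /=; rewrite IH // subSS subSS.
    exact: leq_subr.
  move/addIr; rewrite bin1; apply: mulfI.
  by rewrite pnatr_eq0.
Qed.

End Conv.
Arguments conv {R}. Arguments aa {R}. Arguments cc {R}. Arguments DD {R}.
Arguments aD {R}. Arguments conv_assoc {R}. Arguments conv_eql {R}. Arguments conv_uniq {R}.

Theorem theorem5 (R : realType) (lam x : R) (n : nat) (hlam : lam != 0)
  (beta : nat -> R) (S2 : nat -> nat -> R)
  (hbeta : is_degBernoulli lam x beta) (hS : is_degStirling2 lam S2) :
  beta n =
  \sum_(j < n.+1)
     (lam ^+ j * dfall 1 lam^-1 j.+1 / j.+1%:R) *
     \sum_(j <= k < n.+1) 'C(n, k)%:R * S2 k j * dfall x lam (n - k)%N.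
Proof.
pose E := dfall x lam.
pose gam := conv (DD lam S2) E.
have hg : forall m, conv (aa lam) beta m = conv (aa lam) gam m.
  move=> m; rewrite (hbeta m : conv (aa lam) beta m = _) /gam conv_assoc (conv_eql _ _ _ _ (aD lam S2 hlam hS)).
  rewrite /conv; case: m => [|m].
    by rewrite big_ord_recl big_ord0 !mulr0 !mul0r addr0.
  rewrite big_ord_recl /= mulr0 mul0r add0r big_ord_recl /= /bump /= add1n.
  rewrite big1 ?addr0 ?bin1 ?mulr1 ?subSS ?subn0 //.
  by move=> k _; rewrite mulr0 mul0r.
have a0 : aa lam 0%N = 0 by rewrite /aa /dfall big_ord0 subrr.
have a1 : aa lam 1%N = 1 by rewrite /aa /dfall big_ord1 /= mul0r subr0 subr0.
rewrite (conv_uniq _ _ _ a0 a1 hg n) /gam /conv /DD.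
have e : forall j : 'I_n.+1, \sum_(j <= k < n.+1) 'C(n, k)%:R * S2 k j * dfall x lam (n - k)%N
   = \sum_(k < n.+1) (if (j <= k)%N then 'C(n, k)%:R * S2 k j * dfall x lam (n - k)%N else 0).
  by move=> j; rewrite big_geq_mkord big_mkcond.
under [RHS]eq_bigr => j _ do rewrite e mulr_sumr.
rewrite exchange_big /=; apply: eq_bigr => -[k hk] _ /=.
rewrite (big_ord_widen n.+1 (fun j => S2 k j * cc lam j)) // big_mkcond mulr_sumr mulr_suml.
apply: eq_bigr => j _; rewrite ltnS; case: ifP => _; last by rewrite !mulr0 mul0r.
rewrite /cc /E; ring.
Qed.
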